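(* Let $\mathcal{K}^{\langle\infty\rangle}$ be an unbounded simple nested fractal. There exists a constant $C_8$ such that for every $M\in\mathbb{Z}$, every $x\in\mathcal{K}^{\langle\infty\rangle}$ and every integer $n\ge1$, $$\#\mathcal{L}_{M,n,x}\le C_8\,n^{d_f},$$ where $d_f=\log N/\log L$.
   Context: Setting: $L>1$, $N\ge2$, $\nu_1=0,\dots,\nu_N\in\mathbb{R}^2$, $\Psi_i(x)=x/L+\nu_i$, and $\mathcal{K}^{\langle 0\rangle}=\bigcup_i\Psi_i(\mathcal{K}^{\langle 0\rangle})$ is a planar simple nested fractal (with $V_0^{\langle0\rangle}$ its set of essential fixed points, $k=\#V_0^{\langle0\rangle}\ge3$). $\mathcal{K}^{\langle M\rangle}=L^M\mathcal{K}^{\langle 0\rangle}$, $\mathcal{K}^{\langle\infty\rangle}=\bigcup_{M\ge0}\mathcal{K}^{\langle M\rangle}$. An $M$-complex is $\mathcal{K}^{\langle M\rangle}+\sum_{j=M+1}^{J}L^j\nu_{i_j}$ ($J\ge M+1$, $i_j\in\{1,\dots,N\}$); $\mathcal{T}_M$ is the set of all $M$-complexes. For fixed $x$: $\mathcal{L}_{M,1,x}=\{\Delta_M\in\mathcal{T}_M: x\in\Delta_M\}$ and, for $n\ge1$, $\mathcal{L}_{M,n+1,x}=\{\Delta_M\in\mathcal{T}_M\setminus\bigcup_{i=1}^n\mathcal{L}_{M,i,x}:\ \exists\,\widetilde{\Delta}_M\in\mathcal{L}_{M,n,x},\ \widetilde{\Delta}_M\cap\Delta_M\ne\emptyset\}$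 (the $M$-complexes ''at graph distance $n$'' from $x$). *)

(* Defs.v *)
From HB Require Import structures.
From mathcomp Require Import all_boot all_order all_algebra.
From mathcomp Require Import all_classical all_reals all_analysis.
Set Implicit Arguments. Unset Strict Implicit. Unset Printing Implicit Defensive.
Import Order.TTheory GRing.Theory Num.Theory.
Import numFieldNormedType.Exports.
Local Open Scope ring_scope.
Local Open Scope classical_set_scope.

Notation pt R := (R * R)%type.

Section NF.
Variables (R : realType) (N : nat) (L : R) (nu : 'I_N -> pt R) (K : set (pt R)).

Definition padd (x y : pt R) : pt R := (x.1 + y.1, x.2 + y.2).
Definition psub (x y : pt R) : pt R := (x.1 - y.1, x.2 - y.2).
Definition pscale (a : R) (x : pt R) : pt R := (a * x.1, a * x.2).
Definition pdot (x y : pt R) : R := x.1 * y.1 + x.2 * y.2.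

Definition Psi (i : 'I_N) (x : pt R) : pt R := padd (pscale L^-1 x) (nu i).

Definition Psiw (w : seq 'I_N) (x : pt R) : pt R := foldr Psi x w.

Definition fixpts : set (pt R) := [set x | exists i, Psi i x = x].

Definition V0 : set (pt R) :=
  [set x | fixpts x /\ exists i j y, i <> j /\ fixpts y /\ Psi i x = Psi j y].

Definition Vn (n : nat) : set (pt R) :=
  [set z | exists w x, size w = n /\ V0 x /\ z = Psiw w x].

(* reflection in the perpendicular bisector of the segment [x,y] *)
Definition refl (x y z : pt R) : pt R :=
  let u := psub y x in
  let m := pscale (2^-1) (padd x y) in
  psub z (pscale (2 * pdot (psub z m) u / pdot u u) u).

Definition bounded2 (U : set (pt R)) : Prop :=
  exists r : R, forall z, U z -> `|z.1| <= r /\ `|z.2| <= r.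

Definition cells_connected : Prop :=
  forall i j : 'I_N, exists (m : nat) (p : nat -> 'I_N),
    p 0%N = i /\ p m = j /\
    forall k, (k < m)%N -> (Psi (p k) @` K) `&` (Psi (p k.+1) @` K) !=set0.

(* Planar simple nested fractal with translation-only similitudes,
   nu_1 = 0, and at least 3 essential fixed points. *)
Record simple_nested_fractal : Prop := {
  nf_L : 1 < L;
  nf_N : (2 <= N)%N;
  nf_nu1 : forall i : 'I_N, val i = 0%N -> nu i = (0, 0);
  nf_compact : compact K;
  nf_nonempty : K !=set0;
  nf_attractor : K = \bigcup_(i in [set: 'I_N]) (Psi i @` K);
  nf_osc : exists U : set (pt R), open U /\ bounded2 U /\ U !=set0 /\
      (forall i, Psi i @` U `<=` U) /\
      (forall i j, i <> j -> (Psi i @` U) `&` (Psi j @` U) = set0);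
  nf_k3 : exists a b c, V0 a /\ V0 b /\ V0 c /\ a <> b /\ b <> c /\ a <> c;
  nf_connected : cells_connected;
  nf_symmetry : forall x y, V0 x -> V0 y -> x <> y ->
      forall n, refl x y @` Vn n = Vn n;
  nf_nesting : forall i j, i <> j ->
      (Psi i @` K) `&` (Psi j @` K) = (Psi i @` V0) `&` (Psi j @` V0)
}.

Definition KM (M : int) : set (pt R) := pscale (L ^ M) @` K.

Definition Kinf : set (pt R) := [set z | exists M : nat, KM M z].

(* M-complexes: K^<M> + sum_{j=M+1}^{J} L^j nu_{i_j}, J >= M+1;
   here J = M + m + 1 and w k = i_{M+1+k}. *)
Definition complex (M : int) (D : set (pt R)) : Prop :=
  exists (m : nat) (w : 'I_m.+1 -> 'I_N),
    let s : pt R := (\sum_(k < m.+1) L ^ (M + 1 + (k : nat)%:Z) * (nu (w k)).1,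
                     \sum_(k < m.+1) L ^ (M + 1 + (k : nat)%:Z) * (nu (w k)).2) in
    D = padd s @` KM M.

(* Lpair M x n = (L_{M,n+1,x}, union_{i=1}^{n+1} L_{M,i,x}) *)
Fixpoint Lpair (M : int) (x : pt R) (n : nat) : set (set (pt R)) * set (set (pt R)) :=
  match n with
  | 0%N => let A := [set D | complex M D /\ D x] in (A, A)
  | n'.+1 =>
      let p := Lpair M x n' in
      let B := [set D | complex M D /\ ~ p.2 D /\
                        exists D', p.1 D' /\ D' `&` D !=set0] in
      (B, p.2 `|` B)
  end.

(* L_{M,n,x} for n >= 1 (empty for n = 0, never used) *)
Definition Lset (M : int) (n : nat) (x : pt R) : set (set (pt R)) :=
  if n is n'.+1 then (Lpair M x n').1 else set0.

End NF.

(* Main.v *)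
Require Import Defs.
From HB Require Import structures.
From mathcomp Require Import all_boot all_order all_algebra.
From mathcomp Require Import all_classical all_reals all_analysis.
From mathcomp Require Import ring lra.
Import Order.TTheory GRing.Theory Num.Theory.
Import numFieldNormedType.Exports.
Local Open Scope ring_scope.
Local Open Scope classical_set_scope.
Set Implicit Arguments. Unset Strict Implicit. Unset Printing Implicit Defensive.

Section Aux.
Variables (R : realType) (N : nat) (L : R) (nu : 'I_N -> pt R).
Hypothesis L1 : 1 < L.

Lemma L0 : L != 0. Proof. by rewrite gt_eqF // (lt_trans ltr01 L1). Qed.
Lemma Lgt0 : 0 < L. Proof. exact: (lt_trans ltr01 L1). Qed.

Definition ts (p : nat) (v : nat -> 'I_N) : pt R :=
  (\sum_(i < p) L ^+ i * (nu (v i)).1, \sum_(i < p) L ^+ i * (nu (v i)).2).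

Lemma word_ts p v : exists a : seq 'I_N, size a = p /\
  forall y, pscale (L ^+ p) (Psiw L nu a y) = padd y (pscale L (ts p v)).
Proof.
elim: p => [|p [a [sa Ha]]].
  exists [::]; split => // -[y1 y2].
  by rewrite /pscale /padd /ts /= !big_ord0 !mulr0 !addr0 !mul1r.
exists (v p :: a); split; first by rewrite /= sa.
move=> y; have := Ha y.
rewrite /pscale /padd /ts /= !big_ord_recr /=.
case: (Psiw L nu a y) => q1 q2 /= [e1 e2].
have LV : L^-1 * L = 1 by rewrite mulVf // L0.
congr pair.
  rewrite mulrDr exprSr -mulrA (mulrA L) (mulrC L) LV mul1r e1 mulrDr; ring.
rewrite mulrDr exprSr -mulrA (mulrA L) (mulrC L) LV mul1r e2 mulrDr; ring.
Qed.

Lemma Psi_inj i : injective (Psi L nu i).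
Proof.
move=> [a1 a2] [b1 b2]; rewrite /Psi /padd /pscale /= => -[e1 e2].
have h : L^-1 != 0 by rewrite invr_eq0 L0.
move/addIr: e1 => /(mulfI h) ->; by move/addIr: e2 => /(mulfI h) ->.
Qed.

Variable U : set (pt R).
Hypothesis hsub : forall i, Psi L nu i @` U `<=` U.
Hypothesis hdisj : forall i j, i <> j -> (Psi L nu i @` U) `&` (Psi L nu j @` U) = set0.

Lemma Psiw_U a y : U y -> U (Psiw L nu a y).
Proof. elim: a => //= i a IH /IH Uy; apply: (hsub (i:=i)); by exists (Psiw L nu a y). Qed.

Lemma Psiw_disj a b y y' : size a = size b -> a <> b -> U y -> U y' ->
  Psiw L nu a y <> Psiw L nu b y'.
Proof.
elim: a b => [|i a IH] [|j b] //= [sab] nab Uy Uy' e.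
have [ij|ij] := eqVneq i j.
  subst j; have nab' : a <> b by move=> ab; apply: nab; rewrite ab.
  exact: (IH b sab nab' Uy Uy' (Psi_inj e)).
have : (Psi L nu i @` U `&` Psi L nu j @` U) (Psi L nu i (Psiw L nu a y)).
  split; first by exists (Psiw L nu a y) => //; exact: Psiw_U.
  by rewrite e; exists (Psiw L nu b y') => //; exact: Psiw_U.
by rewrite hdisj //; apply/eqP.
Qed.


Lemma opn (p : pt R) : open U -> U p -> exists e : R, 0 < e /\
  forall z : pt R, `|z.1 - p.1| < e -> `|z.2 - p.2| < e -> U z.
Proof.
move=> oU Up.
have /nbhs_ballP [e e0 He] : nbhs p U by exact: open_nbhs_nbhs.
exists e; split => // z h1 h2; apply: He.
by split; rewrite /ball /= distrC.
Qed.

Lemma pscale_inj (c : R) : c != 0 -> injective (pscale c).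
Proof.
move=> c0 [a1 a2] [b1 b2]; rewrite /pscale /= => -[e1 e2].
by rewrite (mulfI c0 e1) (mulfI c0 e2).
Qed.

Lemma sep : open U -> U !=set0 -> exists d : R, 0 < d /\
  forall p v v', ts p v <> ts p v' ->
   d <= `|(ts p v).1 - (ts p v').1| \/ d <= `|(ts p v).2 - (ts p v').2|.
Proof.
move=> oU [p0 Up0].
have [e [e0 He]] := opn oU Up0.
have Lp := Lgt0.
exists (e / L); split; first by rewrite divr_gt0.
move=> p v v' ne.
case: (lerP (e / L) `|(ts p v).1 - (ts p v').1|) => h1; first by left.
case: (lerP (e / L) `|(ts p v).2 - (ts p v').2|) => h2; first by right.
exfalso.
have [a [sa Ha]] := word_ts p v.
have [b [sb Hb]] := word_ts p v'.
move: ne h1 h2 Ha Hb.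
case: (ts p v) => t1 t2; case: (ts p v') => u1 u2 /= ne h1 h2 Ha Hb.
have ab : a <> b.
  move=> ab; subst b; apply: ne.
  have := Ha p0; rewrite Hb; case: p0 {Up0 He} => q1 q2.
  rewrite /padd /pscale /= => -[/addrI e1 /addrI e2].
  by rewrite (mulfI L0 e1) (mulfI L0 e2).
set h1' := L / 2 * (t1 - u1); set h2' := L / 2 * (t2 - u2).
have hh : forall s : R, `|s| < e / L -> `|L / 2 * s| < e.
  move=> s hs; rewrite normrM gtr0_norm ?divr_gt0 //.
  rewrite ltr_pdivlMr // in hs.
  have : `|s| * L < e by [].
  have : 0 <= `|s| * L by rewrite mulr_ge0 // ltW.
  move=> ? ?; rewrite -mulrA mulrC -mulrA; lra.
have Uy : U (p0.1 - h1', p0.2 - h2').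
  apply: He => /=; rewrite addrAC subrr add0r normrN; exact: hh.
have Uy' : U (p0.1 + h1', p0.2 + h2').
  apply: He => /=; rewrite addrAC subrr add0r; exact: hh.
apply: (Psiw_disj _ ab Uy Uy'); first by rewrite sa sb.
apply: (@pscale_inj (L ^+ p)); first by rewrite expf_neq0 // L0.
rewrite Ha Hb /padd /pscale /h1' /h2' /=; congr pair.
  by field.
by field.
Qed.

End Aux.

Section Aux2.
Variables (R : realType) (N : nat) (L : R) (nu : 'I_N -> pt R).
Hypothesis L1 : 1 < L.
Variable i0 : 'I_N.
Hypothesis nu0 : nu i0 = (0, 0).

Definition pad (p : nat) (v : nat -> 'I_N) (i : nat) := if (i < p)%N then v i else i0.

Lemma ts_pad p q v : (p <= q)%N -> ts L nu q (pad p v) = ts L nu p v.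
Proof.
move=> le; rewrite /ts; congr pair.
  rewrite (big_ord_widen _ (fun i => L ^+ i * (nu (v i)).1) le) [RHS]big_mkcond.
  by apply: eq_bigr => i _; rewrite /pad; case: ifP => _ //; rewrite nu0 mulr0.
rewrite (big_ord_widen _ (fun i => L ^+ i * (nu (v i)).2) le) [RHS]big_mkcond.
by apply: eq_bigr => i _; rewrite /pad; case: ifP => _ //; rewrite nu0 mulr0.
Qed.

Lemma ts_split a b v : ts L nu (a + b) v =
  padd (ts L nu a v) (pscale (L ^+ a) (ts L nu b (fun i => v (a + i)%N))).
Proof.
rewrite /ts /padd /pscale /=; congr pair; rewrite big_split_ord /= mulr_sumr;
 congr (_ + _); apply: eq_bigr => i _; by rewrite exprD mulrA.
Qed.

Definition Dof (K : set (pt R)) (M : int) (s : pt R) :=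
  padd (pscale (L ^ M * L) s) @` KM L K M.

Lemma complex_repr K M D k0 : complex L nu K M D ->
  exists W P, (k0 <= P)%N /\ D = Dof K M (ts L nu P W).
Proof.
move=> [m [w ->]].
exists (pad m.+1 (fun i => w (inord i))), (maxn m.+1 k0); split; first exact: leq_maxr.
rewrite /Dof ts_pad ?leq_maxl //; congr (padd _ @` _).
have L0' : L != 0 by rewrite gt_eqF // (lt_trans ltr01 L1).
rewrite /ts /pscale /=; congr pair; rewrite mulr_sumr; apply: eq_bigr => i _;
  by rewrite inord_val expfzDr // expfzDr // expr1z -exprnP mulrA.
Qed.

End Aux2.

Definition close (R : realType) (r : R) (z z' : pt R) :=
  `|z.1 - z'.1| <= r /\ `|z.2 - z'.2| <= r.

Lemma close_trans (R : realType) (r1 r2 : R) a b c :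
  close r1 a b -> close r2 b c -> close (r1 + r2) a c.
Proof.
move=> [h1 h2] [k1 k2]; split.
  by rewrite (le_trans _ (lerD h1 k1)) // -(subrKA b.1) ler_normD.
by rewrite (le_trans _ (lerD h2 k2)) // -(subrKA b.2) ler_normD.
Qed.

Lemma close_sym (R : realType) (r : R) a b : close r a b -> close r b a.
Proof. by move=> [h1 h2]; split; rewrite distrC. Qed.

Section Dist.
Variables (R : realType) (N : nat) (L : R) (nu : 'I_N -> pt R) (K : set (pt R)).
Hypothesis L1 : 1 < L.
Variable i0 : 'I_N.
Hypothesis nu0 : nu i0 = (0, 0).
Variable rK : R.
Hypothesis hK : forall z, K z -> `|z.1| <= rK /\ `|z.2| <= rK.

Lemma Dof_diam M s z z' : Dof L K M s z -> Dof L K M s z' ->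
  close (2 * rK * L ^ M) z z'.
Proof.
have LM : 0 < L ^ M by rewrite exprz_gt0 // (lt_trans ltr01 L1).
move=> [_ [y Ky <-] <-] [_ [y' Ky' <-] <-].
have [h1 h2] := hK Ky; have [h1' h2'] := hK Ky'.
rewrite /close /padd /pscale /=; split.
  rewrite opprD addrACA subrr add0r -mulrBr normrM gtr0_norm // mulrC.
  have hn : `|y.1 - y'.1| <= 2 * rK by rewrite (le_trans (ler_normB _ _)) //; lra.
  by rewrite ler_pM2r.
rewrite opprD addrACA subrr add0r -mulrBr normrM gtr0_norm // mulrC.
have hn : `|y.2 - y'.2| <= 2 * rK by rewrite (le_trans (ler_normB _ _)) //; lra.
by rewrite ler_pM2r.
Qed.

Lemma Lpair_near M x n D : (Lpair L nu K M x n).1 D ->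
  complex L nu K M D /\ forall z, D z -> close (n.+1%:R * (2 * rK * L ^ M)) z x.
Proof.
elim: n D => [|n IH] D /=.
  move=> [cD Dx]; split => // z Dz.
  have [W [P [_ eD]]] := complex_repr L1 nu0 0 cD.
  rewrite mul1r; rewrite eD in Dz Dx; exact: Dof_diam Dz Dx.
move=> [cD [_ [D' [D'1 [y [D'y Dy]]]]]]; split => // z Dz.
have [_ H'] := IH D' D'1.
have [W [P [_ eD]]] := complex_repr L1 nu0 0 cD.
have := close_trans (Dof_diam (eq_ind _ (fun X => X z) Dz _ eD) (eq_ind _ (fun X => X y) Dy _ eD)) (H' y D'y).
have e : forall a : R, n.+2%:R * a = a + n.+1%:R * a by move=> a; rewrite mulrS mulrDl mul1r.
by rewrite e.
Qed.

End Dist.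
Lemma tri3 (R : realType) (u v w : R) : `|u - v - w| <= `|u| + `|v| + `|w|.
Proof.
apply: (le_trans (ler_normB _ _)); rewrite lerD2r; exact: ler_normB.
Qed.

Lemma key_bound (R : realType) (a L Lk n rK q P Y T X Z : R) :
  0 < a -> 1 <= L -> 1 <= Lk -> 0 <= n -> n <= Lk -> 0 <= rK -> 0 <= q ->
  `|Z - X| <= n * (2 * rK * a) -> Z = a * L * (P + Lk * T) + a * Y ->
  `|Y| <= rK -> `|P| <= Lk * q -> `|T - X / (a * L * Lk)| <= 3 * rK + q.
Proof.
move=> a0 L1 Lk1 n0 nLk rK0 q0 hZ eZ hY hP.
have L0 : 0 < L by lra.
have Lk0 : 0 < Lk by lra.
have lam0 : 0 < a * L * Lk by rewrite !mulr_gt0.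
have e : T - X / (a * L * Lk) = ((Z - X) - a * L * P - a * Y) / (a * L * Lk).
  by rewrite eZ; field; rewrite !gt_eqF.
rewrite e normrM normfV (gtr0_norm lam0) ler_pdivrMr //.
have t3 := tri3 (Z - X) (a * L * P) (a * Y).
rewrite !normrM !(gtr0_norm a0) (gtr0_norm L0) in t3.
have c0 : 0 <= 2 * rK * a by rewrite !mulr_ge0 // ltW.
have h1 : `|Z - X| <= Lk * (2 * rK * a).
  by apply: (le_trans hZ); rewrite ler_wpM2r.
have h2 : Lk * (2 * rK * a) <= L * (Lk * (2 * rK * a)).
  by rewrite ler_peMl // mulr_ge0 // ltW.
have h3 : a * L * `|P| <= a * L * (Lk * q).
  by rewrite ler_wpM2l // mulr_ge0 // ltW.
have h4 : a * `|Y| <= a * rK by rewrite ler_wpM2l // ltW.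
have h5 : a * rK <= (L * Lk) * (a * rK).
  have LL : 1 <= L * Lk by nra.
  by rewrite ler_peMl // mulr_ge0 // ltW.
nra.
Qed.

Lemma geom_bound (R : realType) (N : nat) (L : R) (F : 'I_N -> R) (c : R) (v : nat -> 'I_N) k :
  1 < L -> 0 <= c -> (forall i, `|F i| <= c) ->
  `|\sum_(i < k) L ^+ i * F (v i)| <= L ^+ k * (c / (L - 1)).
Proof.
move=> L1 c0 hF.
have L10 : 0 < L - 1 by rewrite subr_gt0.
suff : `|\sum_(i < k) L ^+ i * F (v i)| <= c * (L ^+ k - 1) / (L - 1).
  move=> h; apply: (le_trans h); rewrite mulrA ler_pM2r ?invr_gt0 // mulrC ler_wpM2r //.
  by rewrite lerBlDr lerDl.
elim: k => [|k IH]; first by rewrite big_ord0 normr0 expr0 subrr mulr0 mul0r.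
rewrite big_ord_recr /= (le_trans (ler_normD _ _)) //.
have Lk : 0 < L ^+ k by rewrite exprn_gt0 // (lt_trans ltr01 L1).
have h2 : `|L ^+ k * F (v k)| <= L ^+ k * c.
  by rewrite normrM gtr0_norm // ler_wpM2l // ltW.
have -> : c * (L ^+ k.+1 - 1) / (L - 1) = c * (L ^+ k - 1) / (L - 1) + L ^+ k * c.
  rewrite exprS; field; by rewrite gt_eqF.
exact: lerD.
Qed.

Lemma pow_bound (R : realType) (N : nat) (L : R) n k0 : 1 < L -> (2 <= N)%N -> (1 <= n)%N ->
  (forall j, n%:R <= L ^+ j -> (k0 <= j)%N) ->
  (N%:R : R) ^+ k0 <= N%:R * (n%:R `^ (ln (N%:R : R) / ln L)).
Proof.
move=> L1 N2 n1 hmin.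
have lnL : 0 < ln L by exact: ln_gt0.
have N1 : (1 : R) <= N%:R by rewrite ler1n (leq_trans _ N2).
have n1' : (1 : R) <= n%:R by rewrite ler1n.
have lnN : 0 <= ln (N%:R : R) by exact: ln_ge0.
have lnn : 0 <= ln (n%:R : R) by exact: ln_ge0.
have d0 : 0 <= ln (N%:R : R) / ln L by rewrite divr_ge0 // ltW.
have nz : (n%:R : R) != 0 by rewrite gt_eqF // (lt_le_trans ltr01 n1').
have pE : n%:R `^ (ln (N%:R : R) / ln L) = expR (ln (N%:R : R) / ln L * ln n%:R).
  by rewrite /powR (negbTE nz).
rewrite pE.
case: k0 hmin => [|j] hmin.
  rewrite expr0 -[1 in X in X <= _]mulr1 ler_pM //.
  by rewrite (le_trans _ (expR_ge1Dx _)) // lerDl mulr_ge0.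
rewrite exprS ler_pM // ?exprn_ge0 // ?ler0n // ?expR_ge0 //.
have hj : L ^+ j < n%:R.
  by rewrite ltNge; apply/negP => /hmin; rewrite ltnn.
have Nj : (N%:R : R) ^+ j = expR (j%:R * ln N%:R).
  by rewrite expRM_natl lnK // posrE (lt_le_trans ltr01 N1).
rewrite Nj ler_expR.
have Lj0 : 0 < L ^+ j by rewrite exprn_gt0 // (lt_trans ltr01 L1).
have : ln (L ^+ j) <= ln (n%:R : R).
  by rewrite ler_ln ?posrE // ?ltW // (lt_le_trans ltr01 n1').
rewrite lnXn ?(lt_trans ltr01 L1) // -(mulr_natr (ln L)) => h.
have : ln (N%:R : R) / ln L * (ln L * j%:R) <= ln (N%:R : R) / ln L * ln n%:R.
  by apply: ler_wpM2l.
have -> : ln (N%:R : R) / ln L * (ln L * j%:R) = j%:R * ln N%:R.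
  by field; rewrite gt_eqF.
done.
Qed.

Lemma bern (R : realType) (L : R) k : 1 < L -> 1 + k%:R * (L - 1) <= L ^+ k.
Proof.
move=> L1; elim: k => [|k IH]; first by rewrite mul0r addr0 expr0.
rewrite exprS -nat1r.
have h : 1 <= L ^+ k by rewrite exprn_ege1 // ltW.
have : L * (1 + k%:R * (L - 1)) <= L * L ^+ k by rewrite ler_wpM2l // ltW // (lt_trans ltr01 L1).
have k0 : (0 : R) <= k%:R by rewrite ler0n.
nra.
Qed.

Lemma exists_pow (R : realType) (L : R) (n : nat) : 1 < L -> exists k, n%:R <= L ^+ k.
Proof.
move=> L1; have L10 : 0 < L - 1 by rewrite subr_gt0.
exists (Num.truncn (n%:R / (L - 1))).+1.
apply: le_trans (bern _ L1).
have := truncnS_gt (n%:R / (L - 1)).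
rewrite ltr_pdivrMr // => h; lra.
Qed.

Lemma trunc_close (R : realType) (dl u w : R) : 0 < dl -> 0 <= u -> 0 <= w ->
  Num.truncn (u / dl) = Num.truncn (w / dl) -> `|u - w| < dl.
Proof.
move=> d0 u0 w0 e.
have /andP [a1 a2] := truncn_itv (divr_ge0 u0 (ltW d0)).
have /andP [b1 b2] := truncn_itv (divr_ge0 w0 (ltW d0)).
rewrite e in a1 a2.
have eu : u = u / dl * dl by rewrite divfK // gt_eqF.
have ew : w = w / dl * dl by rewrite divfK // gt_eqF.
rewrite eu ew -mulrBl normrM (gtr0_norm d0) -[X in _ < X]mul1r ltr_pM2r //.
rewrite ltr_norml; apply/andP; split; lra.
Qed.

Lemma bnd (R : realType) (K : set (pt R)) : compact K ->
  exists r : R, 0 < r /\ forall z, K z -> `|z.1| <= r /\ `|z.2| <= r.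
Proof.
move=> /compact_bounded [M0 [_ HM]].
exists (`|M0| + 1); split; first by rewrite ltr_wpDl.
move=> z Kz.
have := HM (`|M0| + 1) _ z Kz.
have h : M0 < `|M0| + 1 by rewrite (le_lt_trans (ler_norm M0)) // ltrDl.
move=> /(_ h) /=; rewrite prod_normE => hz.
split; apply: le_trans hz; by rewrite le_max lexx ?orbT.
Qed.

Lemma nu_le (R : realType) (N : nat) (nu : 'I_N -> pt R) (F : pt R -> R) :
  (forall i, `|F (nu i)| <= `|(nu i).1| + `|(nu i).2|) ->
  forall i, `|F (nu i)| <= \sum_(j < N) (`|(nu j).1| + `|(nu j).2|).
Proof.
move=> hF i; rewrite (bigD1 i) //= (le_trans (hF i)) // lerDl.
by apply: sumr_ge0 => j _; rewrite addr_ge0.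
Qed.

Lemma cell_lt (R : realType) (t cc rho dl : R) : 0 < dl -> `|t - cc| <= rho ->
  0 <= t - cc + rho /\ (Num.truncn ((t - cc + rho) / dl) < (Num.truncn (2 * rho / dl)).+1)%N.
Proof.
move=> d0; rewrite ler_norml => /andP [h1 h2].
have p0 : 0 <= t - cc + rho by lra.
split => //.
rewrite truncn_lt_nat; last by rewrite divr_ge0 // ltW.
apply: le_lt_trans (truncnS_gt _).
rewrite ler_pM2r ?invr_gt0 //; lra.
Qed.

Theorem lemmaA4 (R : realType) (N : nat) (L : R) (nu : 'I_N -> pt R)
    (K : set (pt R)) :
  simple_nested_fractal L nu K ->
  exists C : R, forall (M : int) (x : pt R), Kinf L K x ->
    forall n : nat, (1 <= n)%N ->
    forall (m : nat) (f : 'I_m -> set (pt R)), injective f ->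
      (forall k, Lset L nu K M n x (f k)) ->
      m%:R <= C * (n%:R `^ (ln (N%:R : R) / ln L)).
Proof.
move=> H.
have L1 := nf_L H; have N2 := nf_N H.
have N0 : (0 < N)%N by apply: leq_trans N2.
pose i0 : 'I_N := Ordinal N0.
have nu0 : nu i0 = (0, 0) by exact: (nf_nu1 H (i:=i0) erefl).

have [rK [rK0 hK]] := bnd (nf_compact H).
have [y0 Ky0] := nf_nonempty H.
have [U [oU [_ [U0 [hs hd]]]]] := nf_osc H.
have [dl [dl0 hsep]] := sep L1 hs hd oU U0.
pose nus := \sum_(j < N) (`|(nu j).1| + `|(nu j).2|).
have nus0 : 0 <= nus by apply: sumr_ge0 => j _; rewrite addr_ge0.
have L10 : 0 < L - 1 by rewrite subr_gt0.
pose q := nus / (L - 1).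
have q0 : 0 <= q by rewrite divr_ge0 // ltW.
pose rho := 3 * rK + q.
have rho0 : 0 <= rho by rewrite /rho addr_ge0 // mulr_ge0 // ltW.
pose G := (Num.truncn (2 * rho / dl)).+1.
exists ((G * G)%:R * N%:R).
move=> M x _ [//|n'] _ m f finj Hf.
have Lgt0 : 0 < L by apply: lt_trans L1.
have LM : 0 < L ^ M by rewrite exprz_gt0.
have exk := exists_pow n'.+1 L1.
pose k0 := ex_minn exk.
have [hk0 hmin] : n'.+1%:R <= L ^+ k0 /\ forall j, n'.+1%:R <= L ^+ j -> (k0 <= j)%N.
  by rewrite /k0; case: ex_minnP => k hk hm; split.
have Lk0 : 0 < L ^+ k0 by rewrite exprn_gt0.
have Hn k := Lpair_near L1 nu0 hK (Hf k).
have hc : forall k : 'I_m, exists WP : (nat -> 'I_N) * nat,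
    (k0 <= WP.2)%N /\ f k = Dof L K M (ts L nu WP.2 WP.1).
  move=> k; have [cD _] := Hn k.
  have [W [P [h e]]] := complex_repr L1 nu0 k0 cD; by exists (W, P).
have [g hg] := choice hc.
pose W k := (g k).1.
pose P k := (g k).2.
pose tl k := ts L nu (P k - k0) (fun i => W k (k0 + i)%N).
pose pre k := ts L nu k0 (W k).
have hdec k : ts L nu (P k) (W k) = padd (pre k) (pscale (L ^+ k0) (tl k)).
  by rewrite /P /pre /tl -{1}(subnKC (hg k).1) ts_split.
pose lam := L ^ M * L * L ^+ k0.
pose c : pt R := (x.1 / lam, x.2 / lam).
have hb k : `|(tl k).1 - c.1| <= rho /\ `|(tl k).2 - c.2| <= rho.
  pose z := padd (pscale (L ^ M * L) (ts L nu (P k) (W k))) (pscale (L ^ M) y0).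
  have fz : f k z.
    by rewrite (hg k).2; exists (pscale (L ^ M) y0) => //; exists y0.
  have [hz1 hz2] := (Hn k).2 z fz.
  have [hy1 hy2] := hK y0 Ky0.
  have ez : z = padd (pscale (L ^ M * L) (padd (pre k) (pscale (L ^+ k0) (tl k))))
                     (pscale (L ^ M) y0) by rewrite /z hdec.
  have n0 : (0 : R) <= n'.+1%:R by rewrite ler0n.
  have Lk1 : 1 <= L ^+ k0 by rewrite exprn_ege1 // ltW.
  rewrite /c /rho /lam /=.
  split.
    apply: (@key_bound R (L ^ M) L (L ^+ k0) n'.+1%:R rK q (pre k).1 y0.1 (tl k).1 x.1 z.1 LM (ltW L1) Lk1 n0 hk0 (ltW rK0) q0 hz1 _ hy1).
      by rewrite ez.
    rewrite /pre /ts /=; apply: (@geom_bound R N L (fun j => (nu j).1) nus (W k) k0 L1 nus0) => i; apply: (@nu_le R N nu fst) => j; by rewrite lerDl.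
  apply: (@key_bound R (L ^ M) L (L ^+ k0) n'.+1%:R rK q (pre k).2 y0.2 (tl k).2 x.2 z.2 LM (ltW L1) Lk1 n0 hk0 (ltW rK0) q0 hz2 _ hy2).
    by rewrite ez.
  rewrite /pre /ts /=; apply: (@geom_bound R N L (fun j => (nu j).2) nus (W k) k0 L1 nus0) => i; apply: (@nu_le R N nu snd) => j; by rewrite lerDr.
have cl k : (0 <= (tl k).1 - c.1 + rho /\ (Num.truncn (((tl k).1 - c.1 + rho) / dl) < G)%N) /\
             (0 <= (tl k).2 - c.2 + rho /\ (Num.truncn (((tl k).2 - c.2 + rho) / dl) < G)%N).
  by have [h1 h2] := hb k; split; apply: cell_lt.
pose gm (k : 'I_m) : {ffun 'I_k0 -> 'I_N} * ('I_G * 'I_G) :=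
  ([ffun i : 'I_k0 => W k i],
   (inord (Num.truncn (((tl k).1 - c.1 + rho) / dl)),
    inord (Num.truncn (((tl k).2 - c.2 + rho) / dl)))).
have ginj : injective gm.
  move=> a b e.
  have hW : forall i : 'I_k0, W a i = W b i.
    by move=> i; have := congr1 (fun h : {ffun 'I_k0 -> 'I_N} * ('I_G * 'I_G) => h.1 i) e; rewrite /= !ffunE.
  have e1 := congr1 (fun h => val h.2.1) e.
  have e2 := congr1 (fun h => val h.2.2) e.
  have [[a1 a1'] [a2 a2']] := cl a.
  have [[b1 b1'] [b2 b2']] := cl b.
  rewrite /= !inordK // in e1 e2.
  have d1 := trunc_close dl0 a1 b1 e1.
  have d2 := trunc_close dl0 a2 b2 e2.
  have x1 : (tl a).1 - c.1 + rho - ((tl b).1 - c.1 + rho) = (tl a).1 - (tl b).1 by ring.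
  have x2 : (tl a).2 - c.2 + rho - ((tl b).2 - c.2 + rho) = (tl a).2 - (tl b).2 by ring.
  rewrite x1 in d1; rewrite x2 in d2.
  have etl : tl a = tl b.
    case: (eqVneq (tl a) (tl b)) => // /eqP ne.
    pose Q := maxn (P a - k0) (P b - k0).
    have ea : tl a = ts L nu Q (pad i0 (P a - k0) (fun i => W a (k0 + i)%N)).
      by rewrite (ts_pad L nu0) // leq_maxl.
    have eb : tl b = ts L nu Q (pad i0 (P b - k0) (fun i => W b (k0 + i)%N)).
      by rewrite (ts_pad L nu0) // leq_maxr.
    rewrite ea eb in ne d1 d2.
    by have [h|h] := hsep _ _ _ ne; [have := le_lt_trans h d1 | have := le_lt_trans h d2]; rewrite ltxx.
  have epre : pre a = pre b.
    by rewrite /pre /ts; congr pair; apply: eq_bigr => i _; rewrite hW.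
  apply: finj.
  have fa : f a = Dof L K M (padd (pre a) (pscale (L ^+ k0) (tl a))).
    by rewrite -hdec; exact: (hg a).2.
  have fb : f b = Dof L K M (padd (pre b) (pscale (L ^+ k0) (tl b))).
    by rewrite -hdec; exact: (hg b).2.
  by rewrite fa fb epre etl.
have := leq_card gm ginj; rewrite card_ord !card_prod card_ffun !card_ord => hm.
have hp := pow_bound L1 N2 (ltn0Sn n') hmin.
have h1 : (m%:R : R) <= (N ^ k0 * (G * G))%:R by rewrite ler_nat.
rewrite natrM natrX in h1.
have h2 : (N%:R : R) ^+ k0 * (G * G)%:R <=
    (N%:R * (n'.+1%:R `^ (ln (N%:R : R) / ln L))) * (G * G)%:R.
  by rewrite ler_wpM2r // ler0n.
apply: (le_trans h1); apply: (le_trans h2).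
by rewrite le_eqVlt; apply/orP; left; apply/eqP; ring.
Qed.
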